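(* Let $X\in\mathcal{M}(N,P)$, let $K$ be a positive integer with $K\le\min(N,P)$, and let $L\in\mathcal{M}(P,K)$ be arbitrary. Then $$\min_{Z\in\mathcal{S}(N,K)}\|X-ZL^T\|_F^2 \;=\; d_*(X^TX,\,LL^T)^2 .$$
   Context: $\mathcal{M}(N,K)$ denotes the set of real $N\times K$ matrices and $\mathcal{S}(N,K)=\{M\in\mathcal{M}(N,K): M^TM=I_K\}$ the set of $N\times K$ matrices with orthonormal columns. $\|A\|_F^2=\sum_{i,k}a_{i,k}^2$ is the squared Frobenius norm. For positive semi-definite matrices $A,B$ of the same size, $\sqrt{A}$ denotes the unique PSD square root, and the Bures–Wasserstein distance is $$d_*(A,B):=\Big(\operatorname{tr}(A)-2\operatorname{tr}\big(\sqrt{\sqrt{A}\,B\,\sqrt{A}}\big)+\operatorname{tr}(B)\Big)^{1/2}.$$ *)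

(* Defs.v *)
From HB Require Import structures.
From mathcomp Require Import all_boot all_order all_algebra.
From mathcomp Require Import boolp reals.
Set Implicit Arguments. Unset Strict Implicit. Unset Printing Implicit Defensive.
Import Order.TTheory GRing.Theory Num.Theory.
Local Open Scope ring_scope.

Definition frob2 (R : realType) (m n : nat) (A : 'M[R]_(m, n)) : R :=
  \sum_(i < m) \sum_(k < n) (A i k) ^+ 2.

Definition orthonormal_cols (R : realType) (m n : nat) (M : 'M[R]_(m, n)) : Prop :=
  M^T *m M = 1%:M.

Definition psd (R : realType) (n : nat) (A : 'M[R]_n) : Prop :=
  A^T = A /\ forall v : 'cV[R]_n, 0 <= (v^T *m A *m v) 0 0.

(* the (unique) PSD square root of A; chosen by classical choice,
   defaults to 0 if A has no PSD square root (i.e. A not PSD) *)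
Definition psd_sqrt (R : realType) (n : nat) (A : 'M[R]_n) : 'M[R]_n :=
  match pselect (exists B : 'M[R]_n, psd B /\ B *m B = A) with
  | left h => projT1 (cid h)
  | right _ => 0
  end.

Definition bw_dist (R : realType) (n : nat) (A B : 'M[R]_n) : R :=
  Num.sqrt (\tr A
            - 2 * \tr (psd_sqrt (psd_sqrt A *m B *m psd_sqrt A))
            + \tr B).

(* Main.v *)
Require Import Defs.
From HB Require Import structures.
From mathcomp Require Import all_boot all_order all_algebra.
From mathcomp Require Import boolp reals.
From mathcomp.real_closed Require Import complex.
From mathcomp Require Import ring lra zify.
Set Implicit Arguments. Unset Strict Implicit. Unset Printing Implicit Defensive.
Import Order.TTheory GRing.Theory Num.Theory.
Local Open Scope ring_scope.

Section Eig.
Variable R : rcfType.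

Lemma ReM_real (c : R[i]) (r : R) : complex.Re (c * (Complex r 0)) = complex.Re c * r.
Proof. by case: c => a b /=; rewrite mulr0 subr0. Qed.
Lemma ImM_real (c : R[i]) (r : R) : complex.Im (c * (Complex r 0)) = complex.Im c * r.
Proof. by case: c => a b /=; rewrite mulr0 add0r. Qed.
Lemma ReM (c d : R[i]) : complex.Re (c * d) = complex.Re c * complex.Re d - complex.Im c * complex.Im d.
Proof. by case: c => a b; case: d. Qed.
Lemma ImM (c d : R[i]) : complex.Im (c * d) = complex.Re c * complex.Im d + complex.Im c * complex.Re d.
Proof. by case: c => a b; case: d => c d /=; rewrite addrC. Qed.
Lemma Re_sum (I : finType) (f : I -> R[i]) : complex.Re (\sum_i f i) = \sum_i complex.Re (f i).
Proof. by apply: (big_morph (@complex.Re R)) => [[a b] [c d]|]. Qed.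
Lemma Im_sum (I : finType) (f : I -> R[i]) : complex.Im (\sum_i f i) = \sum_i complex.Im (f i).
Proof. by apply: (big_morph (@complex.Im R)) => [[a b] [c d]|]. Qed.


Lemma dotE m (u : 'rV[R]_m) : (u *m u^T) 0 0 = \sum_k u 0 k ^+ 2.
Proof. by rewrite mxE; apply: eq_bigr => k _; rewrite mxE expr2. Qed.

Lemma dot_ge0 m (u : 'rV[R]_m) : 0 <= (u *m u^T) 0 0.
Proof. by rewrite dotE; apply: sumr_ge0 => k _; exact: sqr_ge0. Qed.

Lemma dot_eq0 m (u : 'rV[R]_m) : (u *m u^T) 0 0 = 0 -> u = 0.
Proof.
rewrite dotE => /psumr_eq0P h; apply/rowP => k; rewrite mxE.
by apply/eqP; rewrite -sqrf_eq0; apply/eqP; apply: h => // j _; exact: sqr_ge0.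
Qed.

Lemma sym_eigen n (A : 'M[R]_n.+1) : A^T = A ->
  exists a (x : 'rV[R]_n.+1), x != 0 /\ x *m A = a *: x.
Proof.
move=> sA.
pose Ac : 'M[R[i]]_n.+1 := map_mx (fun r => Complex r 0) A.
have [z] : exists z, eigenvalue Ac z.
  have /closed_rootP[z rz] : size (char_poly Ac) != 1%N by rewrite size_char_poly.
  by exists z; rewrite eigenvalue_root_char.
move=> /eigenvalueP [w wA wnz].
pose x := map_mx (@complex.Re R) w; pose y := map_mx (@complex.Im R) w.
set a := complex.Re z; set b := complex.Im z.
have hx : x *m A = a *: x - b *: y.
  apply/rowP => j; move/rowP: wA => /(_ j) /(congr1 (@complex.Re R)).
  rewrite !mxE Re_sum ReM => <-.
  by apply: eq_bigr => k _; rewrite !mxE ReM_real.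
have hy : y *m A = b *: x + a *: y.
  apply/rowP => j; move/rowP: wA => /(_ j) /(congr1 (@complex.Im R)).
  rewrite !mxE Im_sum ImM => h; rewrite addrC -h.
  by apply: eq_bigr => k _; rewrite !mxE ImM_real.
have e1 : x *m A *m y^T = x *m (y *m A)^T.
  by rewrite trmx_mul sA mulmxA.
have yx : y *m x^T = x *m y^T.
  by apply/matrixP => i j; rewrite !ord1 !mxE; apply: eq_bigr => k _; rewrite !mxE mulrC.
rewrite hx hy linearD !linearZ /= mulmxDl mulmxDr ?mulNmx ?mulmxBl -!scalemxAl -!scalemxAr ?yx ?mulNmx ?scalerN in e1.
have px := dot_ge0 x; have qy := dot_ge0 y; have x0 := @dot_eq0 _ x; have y0 := @dot_eq0 _ y.
set P := x *m x^T in e1 px x0; set Q := y *m y^T in e1 qy y0; set Rm := x *m y^T in e1.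
clearbody P Q Rm.
move/matrixP: e1 => /(_ 0 0); rewrite !mxE.
set p := P 0 0; set q := Q 0 0; set r := Rm 0 0 => e1.
have eb : b * (p + q) = 0.
  have -> : b * (p + q) = (b * p + a * r) - (a * r - b * q) by ring.
  by rewrite e1 subrr.
have b0 : b = 0.
  have [//|bn0] := eqVneq b 0; case/eqP: wnz.
  move/eqP: eb; rewrite mulf_eq0 (negPf bn0) /= => /eqP pq.
  have p0 : p = 0.
    by move: px qy pq; rewrite -/p -/q; lra.
  have q0 : q = 0 by move: pq; rewrite p0 add0r.
  apply/rowP => k; move: (x0 p0) (y0 q0) => /matrixP/(_ 0 k) + /matrixP/(_ 0 k).
  rewrite !mxE /=.
  by case: (w 0 k) => u v /= -> ->.
rewrite b0 scale0r subr0 in hx; rewrite b0 scale0r add0r in hy.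
have [xz|xnz] := eqVneq x 0.
  exists a, y; split => //; apply: contra_neq wnz => yz0.
  apply/rowP => k; move: xz yz0 => /matrixP/(_ 0 k) + /matrixP/(_ 0 k).
  rewrite !mxE /=.
  by case: (w 0 k) => u v /= -> ->.
by exists a, x.
Qed.

Lemma mmtE k n (M : 'M[R]_(k, n)) a b : (M *m M^T) a b = \sum_c M a c * M b c.
Proof. by rewrite mxE; apply: eq_bigr => c _; rewrite mxE. Qed.

Lemma complete k n (Z : 'M[R]_(k, n)) (S : {set 'I_k}) : (k <= n)%N ->
  (forall i1 i2, i1 \in S -> i2 \in S -> (Z *m Z^T) i1 i2 = (i1 == i2)%:R) ->
  exists Z' : 'M_(k, n), (forall i c, i \in S -> Z' i c = Z i c) /\ Z' *m Z'^T = 1%:M.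
Proof.
move=> kn; move: {2}#|~: S| (erefl #|~: S|) => m; elim: m Z S => [|m IH] Z S cS hS.
  exists Z; split=> //; apply/matrixP => i1 i2.
  have inS i : i \in S.
    by move/eqP: cS; rewrite cards_eq0 => /eqP/setP/(_ i); rewrite !inE => /negbFE.
  by rewrite hS ?mxE.
have [j jS] : exists j, j \in ~: S by apply/set0Pn; rewrite -card_gt0 cS.
have ltS : (#|S| < n)%N.
  by move: (cardsC S) kn; rewrite card_ord cS; lia.
pose W : 'M[R]_(#|S|, n) := \matrix_(i, c) Z (enum_val i) c.
have rW : (0 < \rank (kermx W^T))%N.
  by rewrite mxrank_ker mxrank_tr subn_gt0; apply: leq_ltn_trans (rank_leq_row W) ltS.
pose v := nz_row (kermx W^T).
have vnz : v != 0 by rewrite nz_row_eq0 -mxrank_eq0 -lt0n.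
have vW : v *m W^T = 0 by apply/sub_kermxP; exact: nz_row_sub.
have vS i : i \in S -> \sum_c v 0 c * Z i c = 0.
  move=> iS; transitivity ((v *m W^T) 0 (enum_rank_in iS i)); last by rewrite vW mxE.
  by rewrite mxE; apply: eq_bigr => c _; rewrite !mxE enum_rankK_in.
set s := (v *m v^T) 0 0.
have s_gt0 : 0 < s.
  rewrite lt_def dot_ge0 andbT; apply: contra vnz => /eqP/dot_eq0 ->; exact: eqxx.
pose t := (Num.sqrt s)^-1.
have t2 : t * t * s = 1.
  by rewrite /t -invfM -expr2 sqr_sqrtr ?ltW // mulVf // gt_eqF.
pose Z' := \matrix_(i, c) (if i == j then t * v 0 c else Z i c).
have hc : #|~: (j |: S)| = m.
  have := cardsD1 j (~: S); rewrite jS cS add1n => [[e]].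
  rewrite e; apply: eq_card => i; rewrite !inE negb_or andbC.
  by case: eqVneq.
have jnS : j \notin S by rewrite -in_setC.
have nej i : i \in S -> (i == j) = false by move=> iS; apply/negbTE; apply: contraNneq jnS => <-.
have nej' i : i \in S -> (j == i) = false by move=> iS; rewrite eq_sym nej.
have ho i1 i2 : i1 \in j |: S -> i2 \in j |: S -> (Z' *m Z'^T) i1 i2 = (i1 == i2)%:R.
  rewrite !inE => /predU1P[->|i1S] /predU1P[->|i2S]; rewrite mmtE.
  + rewrite eqxx -t2 /s dotE mulr_sumr; apply: eq_bigr => c _; rewrite !mxE eqxx.
    by rewrite expr2; ring.
  + rewrite nej' //.
    transitivity (t * \sum_c v 0 c * Z i2 c); last by rewrite vS // mulr0.
    rewrite mulr_sumr; apply: eq_bigr => c _; rewrite !mxE eqxx.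
    rewrite nej //.
    by rewrite mulrA.
  + rewrite nej //.
    transitivity (t * \sum_c v 0 c * Z i1 c); last by rewrite vS // mulr0.
    rewrite mulr_sumr; apply: eq_bigr => c _; rewrite !mxE eqxx.
    rewrite nej //.
    by ring.
  + rewrite -hS // mmtE; apply: eq_bigr => c _; rewrite !mxE.
    rewrite nej //.
    rewrite nej //.
have [Z'' [h1 h2]] := IH Z' (j |: S) hc ho.
exists Z''; split => // i c iS; rewrite h1 ?inE ?iS ?orbT // mxE.
by case: eqP => // eij; move: jS; rewrite inE -eij iS.
Qed.

Lemma spectral n (A : 'M[R]_n) : A^T = A ->
  exists (Q : 'M[R]_n) (d : 'rV[R]_n), Q *m Q^T = 1%:M /\ A = Q^T *m diag_mx d *m Q.
Proof.
elim: n A => [|n IH] A sA.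
  by exists 1%:M, 0; split; [rewrite trmx1 mulmx1|apply/matrixP => -[]].
have [a [x [xnz hx]]] := sym_eigen sA.
set s := (x *m x^T) 0 0.
have s_gt0 : 0 < s.
  rewrite lt_def dot_ge0 andbT; apply: contra xnz => /eqP/dot_eq0 ->; exact: eqxx.
pose u := (Num.sqrt s)^-1 *: x.
have hu : u *m A = a *: u by rewrite -scalemxAl hx scalerA mulrC -scalerA.
have uu : u *m u^T = 1%:M.
  rewrite -scalemxAl linearZ -scalemxAr /= scalerA (mx11_scalar (x *m x^T)) -/s.
  by rewrite scale_scalar_mx -invfM -expr2 sqr_sqrtr ?ltW // mulVf // gt_eqF.
clearbody u.
pose Z : 'M[R]_(1 + n, n.+1) := \matrix_(i, c) (if i == 0 then u 0 c else 0).
have [|Z'' [h1 h2]] := @complete _ _ Z [set 0] (leqnn _).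
  move=> i1 i2; rewrite !inE => /eqP -> /eqP ->; rewrite mmtE eqxx.
  have <- : (u *m u^T) 0 0 = 1 by rewrite uu mxE.
  by rewrite mmtE; apply: eq_bigr => c _; rewrite !mxE.
set Q2 := dsubmx Z''.
have l0 : lshift n (0 : 'I_1) = 0 by apply/val_inj.
have eZ : Z'' = col_mx u Q2.
  rewrite -[Z'' in LHS](vsubmxK Z''); congr col_mx; apply/matrixP => i c.
  by rewrite ord1 mxE l0 h1 ?inE // mxE eqxx.
have h2' := h2.
rewrite eZ tr_col_mx mul_col_row (scalar_mx_block 1 n) in h2.
case/eq_block_mx: h2 => _ uQ2 Q2u Q22.
have e1 : u^T *m u + Q2^T *m Q2 = 1%:M.
  by rewrite -mul_row_col -tr_col_mx -eZ; apply: mulmx1C.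
pose A' := Q2 *m A *m Q2^T.
have sA' : A'^T = A' by rewrite /A' !trmx_mul trmxK sA mulmxA.
have [Q' [d' [hQ' eA']]] := IH A' sA'.
have Au : A *m u^T = a *: u^T by rewrite -{1}sA -trmx_mul hu linearZ.
have d1 : diag_mx (a%:M : 'rV_1) = a%:M by apply/matrixP => i j; rewrite !ord1 !mxE.
pose Q : 'M[R]_(1 + n, 1 + n) := col_mx u (Q' *m Q2).
pose d : 'rV[R]_(1 + n) := row_mx a%:M d'.
have hQ : Q *m Q^T = 1%:M.
  rewrite /Q tr_col_mx mul_col_row (scalar_mx_block 1 n) uu !trmx_mul !mulmxA uQ2 mul0mx.
  rewrite -!mulmxA Q2u mulmx0 (mulmxA Q2) Q22 mul1mx hQ'.
  by [].
have hA : A = Q^T *m diag_mx d *m Q.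
  rewrite /Q /d tr_col_mx diag_mx_row mul_row_block mul_row_col !mulmx0 addr0 add0r d1.
  have -> : (Q' *m Q2)^T *m diag_mx d' *m (Q' *m Q2) = Q2^T *m A' *m Q2.
    by rewrite eA' trmx_mul !mulmxA.
  rewrite mul_mx_scalar {1}(_ : A = (u^T *m u + Q2^T *m Q2) *m A *m (u^T *m u + Q2^T *m Q2)).
    rewrite !mulmxDl.
    have uA : u^T *m u *m A = a *: (u^T *m u) by rewrite -mulmxA hu scalemxAr.
    have Au2 : A *m (u^T *m u) = a *: (u^T *m u) by rewrite mulmxA Au -scalemxAl.
    rewrite !mulmxDr uA -!mulmxA Au2 -!scalemxAl -!scalemxAr !mulmxA.
    rewrite -(mulmxA u^T u u^T) uu mulmx1 -(mulmxA Q2^T Q2 u^T) Q2u mulmx0 mul0mx.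
    rewrite -(mulmxA u^T u Q2^T) uQ2 mulmx0 mul0mx !scaler0 addr0 add0r.
    by [].
  by rewrite e1 mul1mx mulmx1.
by exists Q, d.
Qed.
End Eig.

Section PSD.
Variable R : realType.

Lemma qdelta n (D : 'M[R]_n) i : (delta_mx (0 : 'I_1) i *m D *m delta_mx i (0 : 'I_1)) 0 0 = D i i.
Proof. by rewrite -rowE -colE !mxE. Qed.

Lemma quad_diag n (w : 'cV[R]_n) (e : 'rV[R]_n) :
  (w^T *m diag_mx e *m w) 0 0 = \sum_j e 0 j * w j 0 ^+ 2.
Proof.
rewrite mul_mx_diag mxE; apply: eq_bigr => j _; rewrite !mxE.
by rewrite expr2; ring.
Qed.

Lemma spec_psd n (A : 'M[R]_n) : psd A -> exists Q (d : 'rV_n),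
  [/\ Q *m Q^T = 1%:M, A = Q^T *m diag_mx d *m Q & forall i, 0 <= d 0 i].
Proof.
case=> sA pA; have [Q [d [hQ eA]]] := spectral sA; exists Q, d; split=> // i.
have := pA (Q^T *m delta_mx i 0).
rewrite trmx_mul trmxK trmx_delta eA !mulmxA -(mulmxA _ Q Q^T) hQ mulmx1.
by rewrite -(mulmxA _ Q Q^T) hQ mulmx1 qdelta mxE eqxx mulr1n.
Qed.

Lemma psd_sqrt_ex n (A : 'M[R]_n) : psd A -> exists B, psd B /\ B *m B = A.
Proof.
move=> /spec_psd [Q [d [hQ eA d0]]].
pose e : 'rV[R]_n := \row_j Num.sqrt (d 0 j).
exists (Q^T *m diag_mx e *m Q); split; first split.
- by rewrite !trmx_mul trmxK tr_diag_mx mulmxA.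
- move=> v; rewrite (_ : v^T *m _ *m v = (Q *m v)^T *m diag_mx e *m (Q *m v)).
    by rewrite quad_diag; apply: sumr_ge0 => j _; rewrite mxE mulr_ge0 ?sqrtr_ge0 ?sqr_ge0.
  by rewrite trmx_mul !mulmxA.
- rewrite !mulmxA -(mulmxA _ Q Q^T) hQ mulmx1 -(mulmxA Q^T (diag_mx e) (diag_mx e)) mulmx_diag eA.
  congr (_ *m diag_mx _ *m _); apply/rowP => j; rewrite !mxE -expr2 sqr_sqrtr //.
Qed.

Lemma psd_sqrtP n (A : 'M[R]_n) : psd A -> psd (psd_sqrt A) /\ psd_sqrt A *m psd_sqrt A = A.
Proof.
move=> pA; rewrite /psd_sqrt; case: pselect => [h|nh]; first by case: cid.
by exfalso; apply: nh; exact: psd_sqrt_ex.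
Qed.

Lemma diag_delta n (d : 'rV[R]_n) i : diag_mx d *m delta_mx i (0 : 'I_1) = d 0 i *: delta_mx i 0.
Proof.
apply/matrixP => a b; rewrite mul_diag_mx !mxE.
by case: (eqVneq a i) => [->|]; rewrite ?mulr0 //= mulr0.
Qed.

Lemma psd_uniq n (B1 B2 : 'M[R]_n) : psd B1 -> psd B2 -> B1 *m B1 = B2 *m B2 -> B1 = B2.
Proof.
move=> p1 [s2 p2] e12.
have [Q [d [hQ eB d0]]] := spec_psd p1.
have QtQ : Q^T *m Q = 1%:M by apply: mulmx1C.
have B1Q : B1 *m Q^T = Q^T *m diag_mx d by rewrite eB -mulmxA hQ mulmx1.
have col_eq i : B2 *m (Q^T *m delta_mx i 0) = d 0 i *: (Q^T *m delta_mx i (0 : 'I_1)).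
  set q := Q^T *m delta_mx i 0; set e := d 0 i.
  have B1q : B1 *m q = e *: q by rewrite /q mulmxA B1Q -mulmxA diag_delta -scalemxAr.
  have qq : q^T *m q = 1%:M.
    rewrite /q trmx_mul trmxK trmx_delta mulmxA -(mulmxA _ Q Q^T) hQ mulmx1 mul_delta_mx.
    by apply/matrixP => a b; rewrite !ord1 !mxE.
  set r := B2 *m q - e *: q.
  have Br : B2 *m r + e *: r = 0.
    rewrite /r mulmxBr mulmxA -e12 -mulmxA B1q -!scalemxAr B1q scalerBr scalerA.
    by rewrite addrA subrK subrr.
  have r0 : r = 0.
    have rr := dot_ge0 r^T; rewrite trmxK in rr.
    have rBr := p2 r.
    have h : (r^T *m B2 *m r) 0 0 + e * (r^T *m r) 0 0 = 0.
      have hm : r^T *m B2 *m r + e *: (r^T *m r) = 0.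
        by rewrite -mulmxA scalemxAr -mulmxDr Br mulmx0.
      move/matrixP: hm => /(_ 0 0); rewrite {1}mxE [X in _ = X]mxE.
      by rewrite [X in _ + X = _ -> _]mxE.
    suff h0 : (r^T *m r) 0 0 = 0.
      have := @dot_eq0 _ _ r^T; rewrite trmxK => /(_ h0) /(congr1 trmx).
      by rewrite trmxK trmx0.
    have [e0|en0] := eqVneq e 0.
      have -> : r = B2 *m q by rewrite /r e0 scale0r subr0.
      rewrite trmx_mul s2 mulmxA -(mulmxA _ B2 B2) -e12 mulmxA -mulmxA B1q e0 scale0r mulmx0.
      by rewrite mxE.
    have e_gt0 : 0 < e by rewrite lt_def en0 d0.
    have : e * (r^T *m r) 0 0 = 0.
      by apply/eqP; rewrite eq_le mulr_ge0 ?d0 // andbT -h lerDr.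
    by move/eqP; rewrite mulf_eq0 (negPf en0) => /eqP.
  by apply/eqP; rewrite -subr_eq0 -/r r0.
have B2Q : B2 *m Q^T = Q^T *m diag_mx d.
  apply/matrixP => a b; move/matrixP: (col_eq b) => /(_ a 0).
  by rewrite mulmxA -!colE mul_mx_diag !mxE mulrC.
by rewrite -[B2]mulmx1 -QtQ mulmxA B2Q eB.
Qed.

Lemma sqrt_div (x : R) : 0 <= x -> x * (Num.sqrt x)^-1 = Num.sqrt x.
Proof.
move=> x0; have [->|xn0] := eqVneq x 0; first by rewrite mul0r sqrtr0.
have s0 : Num.sqrt x != 0 by rewrite sqrtr_eq0 -ltNge lt_def xn0 x0.
by rewrite -{1}(sqr_sqrtr x0) expr2 -mulrA mulfV // mulr1.
Qed.

Lemma psd_MMt p k (M : 'M[R]_(p, k)) : psd (M *m M^T).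
Proof.
split; first by rewrite trmx_mul trmxK.
move=> v; rewrite (_ : v^T *m (M *m M^T) *m v = (v^T *m M) *m (v^T *m M)^T) ?dot_ge0 //.
by rewrite trmx_mul trmxK !mulmxA.
Qed.

Lemma tr_psd_sqrt p k (M : 'M[R]_(p, k)) (Q : 'M[R]_k) (d : 'rV[R]_k) :
  Q *m Q^T = 1%:M -> M^T *m M = Q^T *m diag_mx d *m Q ->
  \tr (psd_sqrt (M *m M^T)) = \sum_i Num.sqrt (d 0 i).
Proof.
move=> hQ eM; have QtQ : Q^T *m Q = 1%:M by apply: mulmx1C.
pose F := M *m Q^T.
have Fdef : F = M *m Q^T by [].
clearbody F.
have FF : F^T *m F = diag_mx d.
  rewrite Fdef trmx_mul trmxK -mulmxA (mulmxA M^T) eM !mulmxA hQ mul1mx -mulmxA hQ mulmx1.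
  by [].
have Fe i : (F^T *m F) i i = \sum_c F c i ^+ 2.
  by rewrite mxE; apply: eq_bigr => c _; rewrite mxE expr2.
have d0 i : 0 <= d 0 i.
  have := Fe i; rewrite FF mxE eqxx mulr1n => ->; apply: sumr_ge0 => c _; exact: sqr_ge0.
have Fz i c : d 0 i = 0 -> F c i = 0.
  move=> di; have := Fe i; rewrite FF mxE eqxx mulr1n di => /esym/psumr_eq0P h.
  by apply/eqP; rewrite -sqrf_eq0; apply/eqP; apply: h => // c' _; exact: sqr_ge0.
pose eps : 'rV[R]_k := \row_i (Num.sqrt (d 0 i))^-1.
pose T := F *m diag_mx eps *m F^T.
have pT : psd T.
  split; first by rewrite /T trmx_mul trmxK trmx_mul tr_diag_mx mulmxA.
  move=> v; rewrite (_ : v^T *m T *m v = (F^T *m v)^T *m diag_mx eps *m (F^T *m v)).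
    rewrite quad_diag; apply: sumr_ge0 => j _; rewrite mxE mulr_ge0 ?sqr_ge0 //.
    by rewrite invr_ge0 sqrtr_ge0.
  by rewrite /T [in RHS]trmx_mul trmxK !mulmxA.
have TT : T *m T = M *m M^T.
  have FE : F *m (diag_mx eps *m diag_mx d *m diag_mx eps) = F.
    rewrite !mulmx_diag mul_mx_diag; apply/matrixP => c i; rewrite !mxE.
    have [di|dn0] := eqVneq (d 0 i) 0; first by rewrite Fz ?mul0r.
    rewrite [_^-1 * d 0 i]mulrC sqrt_div ?d0 // mulfV ?mulr1 //.
    by rewrite sqrtr_eq0 -ltNge lt_def dn0 d0.
  rewrite /T !mulmxA -(mulmxA _ F^T F) FF -!mulmxA (mulmxA (diag_mx d)) (mulmxA (diag_mx eps)).
  rewrite (mulmxA (diag_mx eps)) (mulmxA F) FE Fdef trmx_mul trmxK mulmxA -(mulmxA M) QtQ mulmx1.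
  by [].
have [pS SS] := psd_sqrtP (psd_MMt M).
rewrite (psd_uniq pS pT); last by rewrite SS TT.
rewrite /T mxtrace_mulC mulmxA FF mulmx_diag mxtrace_diag.
by apply: eq_bigr => i _; rewrite !mxE sqrt_div.
Qed.

Lemma mtmE p k (M : 'M[R]_(p, k)) a b : (M^T *m M) a b = \sum_c M c a * M c b.
Proof. by rewrite mxE; apply: eq_bigr => c _; rewrite mxE. Qed.

Lemma cs_sqrt (I : finType) (a b : I -> R) :
  \sum_c a c ^+ 2 = 1 -> \sum_c a c * b c <= Num.sqrt (\sum_c b c ^+ 2).
Proof.
move=> ha; set d := \sum_c b c ^+ 2; set s := Num.sqrt d.
have d0 : 0 <= d by apply: sumr_ge0 => c _; exact: sqr_ge0.
have e : \sum_c (s * a c - b c) ^+ 2 =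
    \sum_c (s ^+ 2 * a c ^+ 2) - \sum_c (2 * s * (a c * b c)) + \sum_c b c ^+ 2.
  by rewrite -sumrB -big_split /=; apply: eq_bigr => c _; ring.
rewrite -!mulr_sumr ha mulr1 sqr_sqrtr // -/d in e.
have h0 : 0 <= \sum_c (s * a c - b c) ^+ 2 by apply: sumr_ge0 => c _; exact: sqr_ge0.
rewrite e in h0.
have [s0|sn0] := eqVneq s 0.
  have dz : d = 0 by move: (sqr_sqrtr d0); rewrite -/s s0 expr0n.
  have bz c : b c = 0.
    move: dz; rewrite /d => /psumr_eq0P h; apply/eqP; rewrite -sqrf_eq0; apply/eqP.
    by apply: h => // c' _; exact: sqr_ge0.
  by rewrite s0 big1 // => c _; rewrite bz mulr0.
have s_gt0 : 0 < s by rewrite lt_def sn0 sqrtr_ge0.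
set t := \sum_c a c * b c in h0 *.
have : s * t <= s * s.
  by rewrite -expr2 sqr_sqrtr //; move: h0; rewrite -mulrA; lra.
by rewrite ler_pM2l.
Qed.

Lemma mtnE p k (A B : 'M[R]_(p, k)) a b : (A^T *m B) a b = \sum_c A c a * B c b.
Proof. by rewrite mxE; apply: eq_bigr => c _; rewrite mxE. Qed.

Lemma FF_lem n k (Y : 'M[R]_(n, k)) (Q : 'M[R]_k) d :
  Q *m Q^T = 1%:M -> Y^T *m Y = Q^T *m diag_mx d *m Q ->
  (Y *m Q^T)^T *m (Y *m Q^T) = diag_mx d.
Proof.
move=> hQ eY.
by rewrite trmx_mul trmxK -mulmxA (mulmxA Y^T) eY !mulmxA hQ mul1mx -mulmxA hQ mulmx1.
Qed.

Lemma FFii p k (F : 'M[R]_(p, k)) d i : F^T *m F = diag_mx d -> \sum_c F c i ^+ 2 = d 0 i.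
Proof.
move/matrixP => /(_ i i); rewrite mtnE mxE eqxx mulr1n => <-.
by apply: eq_bigr => c _; rewrite expr2.
Qed.

Lemma tau_le n k (Y : 'M[R]_(n, k)) (Q : 'M[R]_k) d (Z : 'M[R]_(n, k)) :
  Q *m Q^T = 1%:M -> Y^T *m Y = Q^T *m diag_mx d *m Q -> Z^T *m Z = 1%:M ->
  \tr (Z^T *m Y) <= \sum_i Num.sqrt (d 0 i).
Proof.
move=> hQ eY hZ; have QtQ := mulmx1C hQ.
have FF := FF_lem hQ eY.
set F := Y *m Q^T in FF; pose W := Z *m Q^T.
have WW : W^T *m W = 1%:M.
  by rewrite /W trmx_mul trmxK -mulmxA (mulmxA Z^T) hZ mul1mx hQ.
have e : \tr (W^T *m F) = \tr (Z^T *m Y).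
  by rewrite /W /F trmx_mul trmxK !mulmxA mxtrace_mulC !mulmxA QtQ mul1mx.
rewrite -e /mxtrace; apply: ler_sum => i _; rewrite mtnE -(FFii i FF).
apply: cs_sqrt; rewrite (FFii (d := (\row_j 1 : 'rV_k)) i) ?mxE //.
by rewrite WW; apply/matrixP => a b; rewrite !mxE.
Qed.

Lemma tau_attain n k (Y : 'M[R]_(n, k)) (Q : 'M[R]_k) d : (k <= n)%N ->
  Q *m Q^T = 1%:M -> Y^T *m Y = Q^T *m diag_mx d *m Q ->
  exists Z : 'M[R]_(n, k), Z^T *m Z = 1%:M /\ \tr (Z^T *m Y) = \sum_i Num.sqrt (d 0 i).
Proof.
move=> kn hQ eY; have QtQ := mulmx1C hQ.
have FF := FF_lem hQ eY; set F := Y *m Q^T in FF.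
have Fdef : F = Y *m Q^T by []. clearbody F.
have d0 i : 0 <= d 0 i.
  by rewrite -(FFii i FF); apply: sumr_ge0 => c _; exact: sqr_ge0.
have Fz i c : d 0 i = 0 -> F c i = 0.
  move=> di; move: (FFii i FF); rewrite di => /psumr_eq0P h.
  by apply/eqP; rewrite -sqrf_eq0; apply/eqP; apply: h => // c' _; exact: sqr_ge0.
pose W0 : 'M[R]_(k, n) := \matrix_(i, c) ((Num.sqrt (d 0 i))^-1 * F c i).
pose S := [set i | d 0 i != 0].
have hyp i1 i2 : i1 \in S -> i2 \in S -> (W0 *m W0^T) i1 i2 = (i1 == i2)%:R.
  rewrite !inE => h1 h2.
  transitivity ((Num.sqrt (d 0 i1))^-1 * (Num.sqrt (d 0 i2))^-1 * (F^T *m F) i1 i2).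
    rewrite mmtE mtnE mulr_sumr; apply: eq_bigr => c _; rewrite !mxE; ring.
  rewrite FF mxE; case: eqVneq => [<-|_]; last by rewrite mulr0n mulr0.
  rewrite mulr1n -invfM -expr2 sqr_sqrtr // mulVf //.
have [W [hW hWW]] := @complete _ _ _ W0 S kn hyp.
exists (W^T *m Q); split.
  by rewrite trmx_mul trmxK -mulmxA (mulmxA W) hWW mul1mx QtQ.
rewrite trmx_mul trmxK -mulmxA mxtrace_mulC -mulmxA -Fdef /mxtrace.
apply: eq_bigr => i _; rewrite mxE.
have [di|dn0] := eqVneq (d 0 i) 0.
  by rewrite di sqrtr0 big1 // => c _; rewrite Fz // mulr0.
transitivity ((Num.sqrt (d 0 i))^-1 * \sum_c F c i ^+ 2).
  rewrite mulr_sumr; apply: eq_bigr => c _; rewrite hW ?inE // mxE; ring.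
by rewrite (FFii i FF) mulrC sqrt_div.
Qed.

Lemma frob2_tr p q (Y : 'M[R]_(p, q)) : frob2 Y = \tr (Y^T *m Y).
Proof.
rewrite /frob2 /mxtrace exchange_big; apply: eq_bigr => k _; rewrite mtnE.
by apply: eq_bigr => i _; rewrite expr2.
Qed.

Lemma frob_expand n p k (X : 'M[R]_(n, p)) (Z : 'M[R]_(n, k)) (L : 'M[R]_(p, k)) :
  Z^T *m Z = 1%:M ->
  frob2 (X - Z *m L^T) = \tr (X^T *m X) - 2 * \tr (Z^T *m (X *m L)) + \tr (L *m L^T).
Proof.
move=> hZ; rewrite frob2_tr [(X - _)^T]raddfB /= trmx_mul trmxK mulmxBl !mulmxBr !raddfB /=.
have t1 : \tr (X^T *m (Z *m L^T)) = \tr (Z^T *m (X *m L)).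
  by rewrite -mxtrace_tr !trmx_mul !trmxK -mulmxA mxtrace_mulC -mulmxA.
have t2 : \tr (L *m Z^T *m X) = \tr (Z^T *m (X *m L)).
  by rewrite -mulmxA mxtrace_mulC -mulmxA.
have t3 : L *m Z^T *m (Z *m L^T) = L *m L^T by rewrite mulmxA -(mulmxA L) hZ mulmx1.
rewrite t1 t2 t3; ring.
Qed.

End PSD.

Unset Implicit Arguments.

Theorem lemma1 (R : realType) (N P K : nat) (X : 'M[R]_(N, P)) (L : 'M[R]_(P, K))
    (hK0 : (0 < K)%N) (hK : (K <= minn N P)%N) :
  (exists Z : 'M[R]_(N, K), orthonormal_cols Z /\
       frob2 (X - Z *m L^T) = bw_dist (X^T *m X) (L *m L^T) ^+ 2) /\
  (forall Z : 'M[R]_(N, K), orthonormal_cols Z ->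
       bw_dist (X^T *m X) (L *m L^T) ^+ 2 <= frob2 (X - Z *m L^T)).
Proof.
have KN : (K <= N)%N by move: hK; rewrite leq_min => /andP[].
set Y := X *m L.
have pG : psd (Y^T *m Y) by have := psd_MMt Y^T; rewrite trmxK.
have [Q [d [hQ eG _]]] := spec_psd pG.
have pA : psd (X^T *m X) by have := psd_MMt X^T; rewrite trmxK.
have [[sS _] SS] := psd_sqrtP pA.
set S := psd_sqrt (X^T *m X) in sS SS *.
have eC : S *m (L *m L^T) *m S = (S *m L) *m (S *m L)^T.
  by rewrite trmx_mul sS !mulmxA.
have eM : (S *m L)^T *m (S *m L) = Q^T *m diag_mx d *m Q.
  by rewrite -eG trmx_mul sS /Y trmx_mul !mulmxA -(mulmxA _ S S) SS !mulmxA.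
have htr := tr_psd_sqrt hQ eM; rewrite -eC in htr.
set sig := \sum_i Num.sqrt (d 0 i) in htr.
have ebw : bw_dist (X^T *m X) (L *m L^T) ^+ 2 =
    Num.sqrt (\tr (X^T *m X) - 2 * sig + \tr (L *m L^T)) ^+ 2.
  by rewrite /bw_dist -/S htr.
have [Z0 [hZ0 tZ0]] := tau_attain KN hQ eG; rewrite -/sig in tZ0.
have V0 : 0 <= \tr (X^T *m X) - 2 * sig + \tr (L *m L^T).
  rewrite -tZ0 -(frob_expand X L hZ0).
  by apply: sumr_ge0 => i _; apply: sumr_ge0 => k _; exact: sqr_ge0.
split.
  by exists Z0; split => //; rewrite ebw sqr_sqrtr // frob_expand // tZ0.
move=> Z hZ; rewrite ebw sqr_sqrtr // frob_expand //.
have := tau_le hQ eG hZ; rewrite -/sig -/Y => ?; lra.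
Qed.

Print Assumptions lemma1.
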